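(* If $G$ is a minimally $1/2$-tough claw-free graph, then for every edge $e$ of $G$ there exists a witness set $S=S(e)\subseteq V(G)$ for $e$ (in the sense defined in the context, with $t=1/2$) such that $|S|\le 1$.
   Context: All graphs are finite, simple and undirected. A graph is claw-free if it contains no induced subgraph isomorphic to $K_{1,3}$. $\omega(H)$ denotes the number of components of $H$. A cutset of $G$ is a vertex set $S$ with $G-S$ disconnected. For positive real $t$, $G$ is $t$-tough if $\omega(G-S)\le |S|/t$ for every cutset $S$; the toughness $\tau(G)$ is the largest such $t$, with $\tau(K_n)=\infty$ for all $n\ge1$. $G$ is minimally $t$-tough if $\tau(G)=t$ and $\tau(G-e)<t$ for every edge $e$. For a minimally $t$-tough graph $G$ and an edge $e$, a witness set for $e$ is a set $S\subseteq V(G)$ such that either $e$ is a bridge of $G$ and $S=\emptyset$, or $e$ is not a bridge of $G$, $\omega(G-S)\le |S|/t$, $\omega((G-e)-S)>|S|/t$, and $e$ is a bridge in $G-S$. *)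

(* Defs.v *)
(* Simple graphs as symmetric irreflexive relations on a finType. *)
From mathcomp Require Import all_boot all_order all_algebra.
Set Implicit Arguments. Unset Strict Implicit. Unset Printing Implicit Defensive.
Import Order.TTheory GRing.Theory Num.Theory.
Local Open Scope ring_scope.

Section Graphs.
Variable T : finType.
Implicit Types (g : rel T) (A S : {set T}) (u v : T).

Definition restr g A : rel T := [rel x y | [&& g x y, x \in A & y \in A]].

Definition ncomp g A : nat :=
  #|[set [set y in A | connect (restr g A) x y] | x in A]|.

Definition del_edge g u v : rel T :=
  [rel x y | g x y && ~~ (((x == u) && (y == v)) || ((x == v) && (y == u)))].

Definition cutset g S : Prop := (1 < ncomp g (~: S))%N.

Definition tough g (t : rat) : Prop :=
  forall S, cutset g S -> (ncomp g (~: S))%:R <= (#|S|)%:R / t.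

(* toughness value: None stands for +infinity *)
Definition is_toughness g (x : option rat) : Prop :=
  match x with
  | None => forall t : rat, 0 < t -> tough g t
  | Some x =>
      if x == 0 then (forall t : rat, 0 < t -> ~ tough g t)
      else [/\ 0 < x, tough g x & forall t : rat, 0 < t -> tough g t -> t <= x]
  end.

Definition minimally_tough g (t : rat) : Prop :=
  is_toughness g (Some t) /\
  forall u v, g u v ->
    exists x : rat, is_toughness (del_edge g u v) (Some x) /\ x < t.

Definition bridge_in g A u v : Prop :=
  [/\ g u v, u \in A, v \in A & (ncomp g A < ncomp (del_edge g u v) A)%N].

Definition bridge g u v : Prop := bridge_in g [set: T] u v.

Definition witness_set g (t : rat) u v S : Prop :=
  (bridge g u v /\ S = set0) \/
  [/\ ~ bridge g u v,
      (ncomp g (~: S))%:R <= (#|S|)%:R / t,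
      (#|S|)%:R / t < (ncomp (del_edge g u v) (~: S))%:R
    & bridge_in g (~: S) u v].

Definition claw_free g : Prop :=
  forall x a b c, g x a -> g x b -> g x c ->
    a != b -> a != c -> b != c ->
    ~~ g a b -> ~~ g a c -> ~~ g b c -> False.

End Graphs.

(* Main.v *)
Require Import Defs.
From mathcomp Require Import all_boot all_order all_algebra zify.
From Stdlib Require Import Classical.
Set Implicit Arguments. Unset Strict Implicit. Unset Printing Implicit Defensive.

Section Comp.
Variables (T : finType) (g : rel T).
Hypothesis gsym : symmetric g.

Definition gcomp (A : {set T}) x := [set y in A | connect (restr g A) x y].

Lemma restr_sym (A : {set T}) : symmetric (restr g A).
Proof. by move=> x y; rewrite /restr /= gsym [(x \in A) && _]andbC. Qed.

Lemma cconnect_sym (A : {set T}) x y : connect (restr g A) x y = connect (restr g A) y x.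
Proof. by apply: sym_connect_sym; apply: restr_sym. Qed.

Lemma comp_eqc (A : {set T}) x y : connect (restr g A) x y -> gcomp A x = gcomp A y.
Proof.
move=> cxy; apply/setP => z; rewrite !inE; case: (z \in A) => //=.
apply/idP/idP => H.
  by apply: connect_trans H; rewrite cconnect_sym.
by apply: connect_trans cxy H.
Qed.

Lemma comp_eq (A : {set T}) x y : y \in gcomp A x -> gcomp A y = gcomp A x.
Proof. by rewrite inE => /andP[_ H]; symmetry; apply: comp_eqc. Qed.

Lemma mem_comp (A : {set T}) x : x \in A -> x \in gcomp A x.
Proof. by move=> xA; rewrite inE xA connect0. Qed.

Lemma comp_sub (A : {set T}) x y : y \in gcomp A x -> y \in A.
Proof. by rewrite inE => /andP[]. Qed.

Lemma comp_edge (A : {set T}) x y : x \in A -> y \in A -> g x y -> y \in gcomp A x.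
Proof. by move=> xA yA gxy; rewrite inE yA connect1 //= /restr /= gxy xA yA. Qed.

Lemma ncomp_le1 (A : {set T}) x y : (ncomp g A <= 1)%N -> x \in A -> y \in A -> y \in gcomp A x.
Proof.
move=> /card_le1P H xA yA.
have cx : gcomp A x \in [set gcomp A z | z in A] by apply: imset_f.
have cy : gcomp A y \in [set gcomp A z | z in A] by apply: imset_f.
have := H _ cx (gcomp A y); rewrite cy inE => /esym/eqP <-.
exact: mem_comp.
Qed.

Lemma connected_closed (X : {set T}) x y : (ncomp g setT <= 1)%N ->
  (forall a b, g a b -> a \in X -> b \in X) -> x \in X -> y \in X.
Proof.
move=> H1 cl xX.
have := ncomp_le1 H1 (in_setT x) (in_setT y).
rewrite inE => /andP[_ /connectP [p pth ->]].
elim: p x pth xX => [|z p IH] x //= /andP[e pth] xX.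
apply: IH pth _; apply: cl xX.
by move: e; rewrite /restr /= => /andP[].
Qed.

Lemma comps_mem (A : {set T}) C d : C \in [set gcomp A z | z in A] -> d \in C -> C = gcomp A d.
Proof. by move=> /imsetP [x _ ->] dC; rewrite (comp_eq dC). Qed.

Lemma comps_sep (A : {set T}) C1 C2 d1 d2 : C1 \in [set gcomp A z | z in A] ->
  C2 \in [set gcomp A z | z in A] -> C1 != C2 -> d1 \in C1 -> d2 \in C2 ->
  d1 != d2 /\ ~~ g d1 d2.
Proof.
move=> H1 H2 ne d1C d2C.
rewrite (comps_mem H1 d1C) (comps_mem H2 d2C) in ne.
split; apply/negP => E.
  by move/eqP: E ne => ->; rewrite eqxx.
have d1A : d1 \in A by move: (H1) d1C => /imsetP[x _ ->]; apply: comp_sub.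
have d2A : d2 \in A by move: (H2) d2C => /imsetP[x _ ->]; apply: comp_sub.
by rewrite (comp_eq (comp_edge d1A d2A E)) eqxx in ne.
Qed.

End Comp.

Section Edge.
Variables (T : finType) (g : rel T) (u v : T).
Hypothesis gsym : symmetric g.

Lemma del_sym : symmetric (del_edge g u v).
Proof.
move=> x y; rewrite /del_edge /= gsym.
by rewrite [in RHS]orbC (andbC (y == u)) (andbC (y == v)).
Qed.

Lemma del_inv (A : {set T}) x y : connect (restr g A) x y ->
  [|| connect (restr (del_edge g u v) A) x y,
      connect (restr (del_edge g u v) A) x u |
      connect (restr (del_edge g u v) A) x v].
Proof.
move/connectP=> [p pth ->]; elim: p x pth => [|z p IH] x /=.
  by rewrite connect0.
move/andP=> [e pth]; have := IH z pth.
case E: (restr (del_edge g u v) A x z).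
  have cxz := connect1 E.
  by case/or3P => H; apply/or3P; [constructor 1|constructor 2|constructor 3];
    apply: connect_trans cxz H.
move: e E; rewrite /restr /del_edge /= => /and3P[gxz xA zA].
rewrite gxz xA zA /= andbT => /negbFE /orP [/andP[/eqP -> _]|/andP[/eqP -> _]] _.
  by rewrite connect0 orbT.
by rewrite connect0 !orbT.
Qed.

Lemma edge_ncomp (A : {set T}) : (ncomp (del_edge g u v) A <= (ncomp g A).+1)%N.
Proof.
set F := gcomp (del_edge g u v) A; set G := gcomp g A.
have -> : ncomp (del_edge g u v) A = #|[set F x | x in A]| by [].
have -> : ncomp g A = #|[set G x | x in A]| by [].
have dsym := del_sym.
set A' := [set x in A | F x != F u].
have key : forall x y, x \in A' -> y \in A' -> G x = G y -> F x = F y.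
  move=> x y; rewrite !inE => /andP[xA Fx] /andP[yA Fy] Gxy.
  have : y \in G x by rewrite Gxy; apply: mem_comp.
  rewrite inE => /andP[_ cxy].
  have cyx : connect (restr g A) y x by rewrite cconnect_sym.
  case/or3P: (del_inv cxy) => H; first exact: comp_eqc.
    by move: Fx; rewrite /F (comp_eqc dsym H) eqxx.
  case/or3P: (del_inv cyx) => H'.
  - by symmetry; apply: comp_eqc.
  - by move: Fy; rewrite /F (comp_eqc dsym H') eqxx.
  - apply: comp_eqc => //; apply: connect_trans H _.
    by rewrite cconnect_sym.
have S1 : [set F x | x in A] \subset F u |: [set F x | x in A'].
  apply/subsetP => C /imsetP [x xA ->]; rewrite !inE.
  case: eqP => //= ne; apply: imset_f; rewrite inE xA; exact/eqP.
set H := fun c => F (odflt u [pick z in A' | G z == c]).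
have S2 : [set F x | x in A'] = [set H c | c in [set G x | x in A']].
  rewrite -imset_comp; apply: eq_in_imset => x xA' /=.
  rewrite /H; case: pickP => [z /andP [zA /eqP Gz]|none].
    by rewrite /= (key _ _ zA xA' Gz).
  by have := none x; rewrite xA' eqxx.
apply: leq_trans (subset_leq_card S1) _.
rewrite cardsU1 S2 -add1n leq_add //; first by case: (_ \notin _).
apply: leq_trans (leq_imset_card _ _) _.
apply: subset_leq_card; apply: imsetS; apply/subsetP => x; rewrite inE => /andP[] //.
Qed.

End Edge.

Lemma card_sumb (I : finType) (B : {set I}) (P : pred I) :
  #|[set x in B | P x]| = \sum_(x in B) (P x : nat).
Proof.
rewrite -sum1_card big_mkcond /= [RHS]big_mkcond /=.
by apply: eq_bigr => x _; rewrite !inE; case: (x \in B); case: (P x).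
Qed.

Lemma sum_up (I : finType) (P : {set I}) (f : I -> nat) k :
  (forall i, i \in P -> f i <= k) -> #|P| * k <= \sum_(i in P) f i ->
  forall i, i \in P -> f i = k.
Proof.
move=> H Hs.
have E : \sum_(i in P) (k - f i) + \sum_(i in P) f i = #|P| * k.
  rewrite -big_split /= -sum_nat_const; apply: eq_bigr => i iP.
  by rewrite subnK // H.
have : \sum_(i in P) (k - f i) == 0.
  have : \sum_(i in P) f i <= #|P| * k by rewrite -E leq_addl.
  move: Hs E; set a := \sum_(i in P) (k - f i); set b := \sum_(i in P) f i.
  move=> *; apply/eqP; lia.
rewrite sum_nat_eq0 => /forallP Hf i iP.
have := Hf i; rewrite iP /= subn_eq0 => H2.
by apply/eqP; rewrite eqn_leq H2 H.
Qed.

Lemma sum_dn (I : finType) (P : {set I}) (f : I -> nat) k :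
  (forall i, i \in P -> k <= f i) -> \sum_(i in P) f i <= #|P| * k ->
  forall i, i \in P -> f i = k.
Proof.
move=> H Hs.
have E : \sum_(i in P) (f i - k) + #|P| * k = \sum_(i in P) f i.
  rewrite -sum_nat_const -big_split /=; apply: eq_bigr => i iP.
  by rewrite subnK // H.
have : \sum_(i in P) (f i - k) == 0.
  move: Hs E; set a := \sum_(i in P) (f i - k); set b := \sum_(i in P) f i.
  move=> *; apply/eqP; lia.
rewrite sum_nat_eq0 => /forallP Hf i iP.
have := Hf i; rewrite iP /= subn_eq0 => H2.
by apply/eqP; rewrite eqn_leq H2 H.
Qed.

Lemma claw_lemma (T : finType) (g : rel T) (S : {set T}) :
  symmetric g -> irreflexive g -> claw_free g -> (ncomp g setT <= 1)%N ->
  (1 < #|S|)%N -> (#|S| * 2 <= ncomp g (~: S))%N -> False.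
Proof.
move=> gsym girr claw conn S2 big.
set A := ~: S.
set comps := [set gcomp g A x | x in A].
have ncE : ncomp g A = #|comps| by [].
rewrite ncE in big.
have subA : forall C d, C \in comps -> d \in C -> d \in A.
  by move=> C d /imsetP [x _ ->]; apply: comp_sub.
have SnA : forall s, s \in S -> s \notin A by move=> s sS; rewrite inE sS.
pose adj (s : T) (C : {set T}) := [exists y in C, g s y].
have Ns : forall s, s \in S -> #|[set C in comps | adj s C]| <= 2.
  move=> s sS; rewrite leqNgt; apply/negP.
  move=> /card_gt2P [C1 [C2 [C3 [[h1 h2 h3] [n12 n23 n31]]]]].
  move: h1 h2 h3; rewrite !inE.
  move=> /andP [c1 /existsP [y1 /andP [y1C g1]]].
  move=> /andP [c2 /existsP [y2 /andP [y2C g2]]].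
  move=> /andP [c3 /existsP [y3 /andP [y3C g3]]].
  have [d12 e12] := comps_sep gsym c1 c2 n12 y1C y2C.
  have [d23 e23] := comps_sep gsym c2 c3 n23 y2C y3C.
  have n13 : C1 != C3 by rewrite eq_sym.
  have [d13 e13] := comps_sep gsym c1 c3 n13 y1C y3C.
  exact: (claw s y1 y2 y3 g1 g2 g3 d12 d13 d23 e12 e13 e23).
have S0 : exists s0, s0 \in S by apply/card_gt0P; apply: ltnW.
case: S0 => s0 s0S.
have degpos : forall C, C \in comps -> 0 < #|[set s in S | adj s C]|.
  move=> C Cc; rewrite lt0n; apply/negP => /eqP /cards0_eq E.
  have nadj : forall s, s \in S -> ~~ adj s C.
    by move=> s sS; apply/negP => a; have := in_set0 s; rewrite -E inE sS a.
  case/imsetP: (Cc) => x xA Cx.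
  have : s0 \in C.
    apply: (@connected_closed _ g C x s0 conn).
      move=> a b gab aC; case bS: (b \in S).
        have := nadj b bS; rewrite /adj; move/existsP; case; exists a.
        by rewrite aC gsym.
      have aA := subA _ _ Cc aC.
      have bA : b \in A by rewrite inE bS.
      by rewrite (comps_mem gsym Cc aC); apply: comp_edge.
    by rewrite Cx; apply: mem_comp.
  by move=> /(subA _ _ Cc); rewrite inE s0S.
pose dg C := #|[set s in S | adj s C]|.
pose ns s := #|[set C in comps | adj s C]|.
have dc : \sum_(s in S) ns s = \sum_(C in comps) dg C.
  rewrite /ns /dg.
  rewrite (eq_bigr (fun s => \sum_(C in comps) (adj s C : nat))); last first.
    by move=> s _; apply: (card_sumb comps (adj s)).
  rewrite exchange_big /=; apply: eq_bigr => C _.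
  by rewrite (card_sumb S (fun s => adj s C)).
have le1 : \sum_(s in S) ns s <= #|S| * 2.
  rewrite -sum_nat_const; apply: leq_sum => s sS; exact: Ns.
have ge1 : #|comps| * 1 <= \sum_(C in comps) dg C.
  rewrite -sum_nat_const; apply: leq_sum => C Cc; exact: degpos.
have dg1 : forall C, C \in comps -> dg C = 1.
  apply: (@sum_dn _ comps dg 1); first by move=> C Cc; exact: degpos.
  rewrite -dc; apply: leq_trans le1 _; rewrite muln1; exact: big.
have ns2 : forall s, s \in S -> ns s = 2.
  apply: (@sum_up _ S ns 2); first exact: Ns.
  rewrite dc; apply: leq_trans big _; rewrite -[#|comps|]muln1; exact: ge1.
have uniq : forall C s s', C \in comps -> s \in S -> s' \in S ->
    adj s C -> adj s' C -> s = s'.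
  move=> C s s' Cc sS s'S a a'.
  have := dg1 C Cc; rewrite /dg => /eqP; rewrite eqn_leq => /andP [/card_le1P H _].
  have hs : s \in [set s in S | adj s C] by rewrite inE sS a.
  have := H s hs s'; rewrite inE s'S a' /= => /esym/eqP ->; done.
case/card_gt1P: S2 => s [s' [sS s'S ss']].
have [s2 [s2S gss2]] : exists s2, s2 \in S /\ g s s2.
  case: (boolP [exists s2 in S, g s s2]).
    by move=> /existsP [s2 /andP [a b]]; exists s2.
  move=> nex; exfalso.
  pose X := s |: [set y in A | adj s (gcomp g A y)].
  have : s' \in X.
    apply: (@connected_closed _ g X s s' conn); last by rewrite !inE eqxx.
    move=> a b gab; rewrite !inE => /orP [/eqP Ea|/andP [aA0 aadj]].
      rewrite Ea in gab.
      case bS: (b \in S).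
        by move/negP: nex; case; apply/existsP; exists b; rewrite bS gab.
      have bA : b \in A by rewrite inE bS.
      apply/orP; right; apply/existsP; exists b.
      by rewrite mem_comp // gab.
    have aA : a \in A by rewrite inE.
    case bS: (b \in S).
      have ab : adj b (gcomp g A a).
        apply/existsP; exists a; rewrite mem_comp //=. move: gab. rewrite gsym. done.
      by rewrite (uniq _ _ _ (imset_f (gcomp g A) aA) sS bS aadj ab) eqxx.
    have bA : b \in A by rewrite inE bS.
    by rewrite (comp_eq gsym (comp_edge aA bA gab)) aadj orbT.
  rewrite !inE => /orP [/eqP e|/andP [s'A _]].
    by rewrite e eqxx in ss'.
  by move: s'A; rewrite s'S.
have := ns2 s sS; rewrite /ns => E2.
have : 1 < #|[set C in comps | adj s C]| by rewrite E2.
case/card_gt1P => C1 [C2 []]; rewrite !inE.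
move=> /andP [c1 /existsP [y1 /andP [y1C g1]]].
move=> /andP [c2 /existsP [y2 /andP [y2C g2]]] n12.
have [d12 e12] := comps_sep gsym c1 c2 n12 y1C y2C.
have y1A := subA _ _ c1 y1C.
have y2A := subA _ _ c2 y2C.
have s2A : s2 \notin A by rewrite inE s2S.
have d1 : y1 != s2 by apply/eqP => e; rewrite e in y1A; rewrite y1A in s2A.
have d2 : y2 != s2 by apply/eqP => e; rewrite e in y2A; rewrite y2A in s2A.
have ne : s != s2 by apply/eqP => e; rewrite e girr in gss2.
have e1 : ~~ g y1 s2.
  apply/negP => gy.
  have a2 : adj s2 C1 by apply/existsP; exists y1; rewrite y1C /=; move: gy; rewrite gsym.
  have a1 : adj s C1 by apply/existsP; exists y1; rewrite y1C /=.
  by rewrite (uniq _ _ _ c1 sS s2S a1 a2) eqxx in ne.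
have e2 : ~~ g y2 s2.
  apply/negP => gy.
  have a2 : adj s2 C2 by apply/existsP; exists y2; rewrite y2C /=; move: gy; rewrite gsym.
  have a1 : adj s C2 by apply/existsP; exists y2; rewrite y2C /=.
  by rewrite (uniq _ _ _ c2 sS s2S a1 a2) eqxx in ne.
exact: (claw s y1 y2 s2 g1 g2 gss2 d12 d1 d2 e12 e1 e2).
Qed.

Lemma del_out (T : finType) (g : rel T) (u v : T) (A : {set T}) :
  (u \notin A) || (v \notin A) -> ncomp (del_edge g u v) A = ncomp g A.
Proof.
move=> H.
have E2 : restr (del_edge g u v) A =2 restr g A.
  move=> x y; rewrite /restr /del_edge /=; case: (boolP (x \in A)) => xA; case: (boolP (y \in A)) => yA;
    rewrite ?andbF ?andbT //=.
  case/orP: H => nA.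
    have xu : (x == u) = false by apply/eqP => e; rewrite -e xA in nA.
    have yu : (y == u) = false by apply/eqP => e; rewrite -e yA in nA.
    by rewrite xu yu andbF /= andbT.
  have xv : (x == v) = false by apply/eqP => e; rewrite -e xA in nA.
  have yv : (y == v) = false by apply/eqP => e; rewrite -e yA in nA.
  by rewrite xv yv andbF /= andbT.
have E3 := eq_connect E2.
rewrite /ncomp; apply: eq_card => C; apply/imsetP/imsetP => -[x xA ->]; exists x => //; apply/setP => y.
  by rewrite !inE E3.
by rewrite !inE E3.
Qed.

Import Order.TTheory GRing.Theory Num.Theory.
Unset Implicit Arguments.
Local Open Scope ring_scope.

Lemma half (n : nat) : (n%:R : rat) / (1 / 2) = (2 * n)%N%:R.
Proof. by rewrite div1r invrK natrM mulrC. Qed.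

Theorem mainTheorem9 (T : finType) (g : rel T) :
  symmetric g -> irreflexive g -> claw_free g ->
  minimally_tough g (1 / 2) ->
  forall u v : T, g u v ->
    exists S : {set T}, witness_set g (1 / 2) u v S /\ (#|S| <= 1)%N.
Proof.
move=> gsym girr claw [tg edges] u v guv.
have h0 : (1 / 2 : rat) != 0 by [].
have h0' : (0 : rat) < 1 / 2 by [].
move: tg; rewrite /is_toughness (negbTE h0) => -[_ T12 _].
have conn : (ncomp g setT <= 1)%N.
  rewrite leqNgt; apply/negP => H.
  have := T12 set0; rewrite /cutset setC0 => /(_ H).
  by rewrite cards0 mul0r lern0 => /eqP E; rewrite E in H.
have [x [tx xlt]] := edges u v guv.
have notT : ~ tough (del_edge g u v) (1 / 2).
  move=> T'; move: tx; rewrite /is_toughness.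
  case: eqP => [x0 | xn0].
    by move=> H; apply: (H (1 / 2) h0' T').
  case=> _ _ H; have := H (1 / 2) h0' T'.
  by rewrite leNgt xlt.
have [S [cS ineq]] : exists S, cutset (del_edge g u v) S /\
    ~ ((ncomp (del_edge g u v) (~: S))%:R <= (#|S|)%:R / (1 / 2) :> rat).
  apply: NNPP => Hn; apply: notT => S cS; apply: NNPP => Hi; apply: Hn.
  by exists S; split.
have ineq' : (2 * #|S| < ncomp (del_edge g u v) (~: S))%N.
  rewrite -(ltr_nat rat) -half ltNge; exact/negP.
case: (classic (bridge g u v)) => [br | nbr].
  by exists set0; split; [left; split | rewrite cards0].
have Sne : (0 < #|S|)%N.
  rewrite lt0n; apply/negP => /eqP /cards0_eq E.
  apply: nbr; rewrite /cutset E setC0 in cS.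
  by split => //; apply: leq_trans cS.
have ub : (ncomp g (~: S) <= 2 * #|S|)%N.
  case: (ltnP 1 (ncomp g (~: S))) => H.
    by have := T12 S H; rewrite half ler_nat.
  by apply: leq_trans H _; lia.
have uA : (u \in ~: S) && (v \in ~: S).
  apply/negPn/negP => H; move: ineq'.
  rewrite del_out; last by rewrite -negb_and.
  by rewrite ltnNge ub.
case/andP: uA => uA vA.
have lb : (2 * #|S| <= ncomp g (~: S))%N.
  have := edge_ncomp u v gsym (~: S); lia.
have S1 : (#|S| <= 1)%N.
  rewrite leqNgt; apply/negP => S2.
  apply: (claw_lemma gsym girr claw conn S2); lia.
exists S; split => //; right; split => //.
- by rewrite half ler_nat.
- by rewrite half ltr_nat.
- by split => //; apply: leq_ltn_trans ub ineq'.
Qed.
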